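(* Let $R$, $G$, $*$, $\sigma$ and $\mathcal{S}$ be as in the context. If $\mathcal{S}$ is anticommutative, then $(x^2,y)=1$ for all $x,y\in G\setminus G_*$.
   Context: Throughout, $R$ is a commutative ring with unity with $\operatorname{char}(R)\neq 2$, and $\mathcal{U}(R)$ is its unit group. $G$ is a group with an involution $*$, i.e. a map $x\mapsto x^*$ with $(xy)^*=y^*x^*$ and $(x^* )^*=x$. The map $\sigma:G\to\mathcal{U}(R)$ is a nontrivial group homomorphism with kernel $N=\ker\sigma$, and it is compatible with $*$: $xx^*\in N$ for all $x\in G$. The group ring $RG$ carries the involution $\left(\sum_{x\in G}\alpha_x x\right)^{\sigma*}=\sum_{x\in G}\sigma(x)\alpha_x x^*$. Write $G_*=\{x\in G: x^*=x\}$ and $N_*=G_*\cap N$. Let $\mathcal{S}$ be the $R$-submodule of $RG$ spanned by the union of the following three sets: - $2\mathcal{S}_1=\{2x: x\in N_*\}$; - $\mathcal{S}_2=\{\alpha x: x\in G_*\setminus N,\ \alpha\in R,\ \alpha(1-\sigma(x))=0\}$; - $\mathcal{S}_3=\{x+\sigma(x)x^*: x\in G\setminus G_*\}$. $\mathcal{S}$ is called anticommutative if $ab+ba=0$ for all $a,b\in\mathcal{S}$. The commutator is $(x,y)=x^{-1}y^{-1}xy$. *)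

(* Defs.v *)
(* Possibly infinite groups are MathComp's [groupType]
   (boot/monoid.v); the group ring RG is modelled by formal finite sums. *)
From HB Require Import structures.
From mathcomp Require Import all_boot all_order all_algebra.
Set Implicit Arguments. Unset Strict Implicit. Unset Printing Implicit Defensive.
Import GRing.Theory.

Section GroupRing.
Variables (R : comNzRingType) (G : groupType).

Definition fsum := seq (R * G).

(* coefficient of g in a formal sum: an element of RG is determined by it *)
Definition coef (a : fsum) (g : G) : R := (\sum_(p <- a | p.2 == g) p.1)%R.

Definition rg_eq (a b : fsum) : Prop := forall g, coef a g = coef b g.

Definition rg_add (a b : fsum) : fsum := a ++ b.
Definition rg_scale (r : R) (a : fsum) : fsum := [seq ((r * p.1)%R, p.2) | p <- a].
Definition rg_mul (a b : fsum) : fsum :=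
  [seq ((p.1 * q.1)%R, (p.2 * q.2)%g) | p <- a, q <- b].

Variables (sigma : G -> R) (star : G -> G).

Definition S_gen (v : fsum) : Prop :=
  (exists x : G, [/\ star x = x, sigma x = 1%R & v = [:: ((2%:R)%R, x)]])
  \/ (exists x : G, exists alpha : R,
        [/\ star x = x, sigma x <> 1%R, (alpha * (1 - sigma x))%R = 0%R
          & v = [:: (alpha, x)]])
  \/ (exists x : G, star x <> x /\ v = [:: (1%R, x); (sigma x, star x)]).

Definition in_S (v : fsum) : Prop :=
  exists gs : seq (R * fsum),
    (forall c, c \in gs -> S_gen c.2) /\
    rg_eq v (flatten [seq rg_scale c.1 c.2 | c <- gs]).

Definition S_anticommutative : Prop :=
  forall a b, in_S a -> in_S b -> rg_eq (rg_add (rg_mul a b) (rg_mul b a)) [::].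

End GroupRing.

(* Main.v *)
Require Import Defs.
From HB Require Import structures.
From mathcomp Require Import all_boot all_order all_algebra.
From mathcomp Require Import ring.
Import GRing.Theory.
Local Open Scope ring_scope.

Lemma coef_cons (R : comNzRingType) (G : groupType) (r : R) (h : G) l g :
  coef ((r, h) :: l) g = ((if h == g then r else 0) + coef l g)%R.
Proof. by rewrite /coef big_cons /=; case: (h == g); rewrite ?add0r. Qed.

Lemma coef_nil (R : comNzRingType) (G : groupType) (g : G) :
  coef ([::] : fsum R G) g = 0%R.
Proof. by rewrite /coef big_nil. Qed.

Lemma gen_in_S (R : comNzRingType) (G : groupType) (sigma : G -> R) star v :
  S_gen sigma star v -> in_S sigma star v.
Proof.
move=> Hv; exists [:: (1%R, v)]; split.
  by move=> c; rewrite inE => /eqP -> /=.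
move=> g; rewrite /= cats0 /rg_scale /coef.
elim: v {Hv} => [|[r h] v IH]; first by rewrite !big_nil.
by rewrite /= !big_cons /= mul1r IH.
Qed.

Theorem lemma3p8 (R : comNzRingType) (G : groupType)
  (charR : (2%N \notin [pchar R])%R)
  (star : G -> G)
  (star_mul : forall x y : G, star (x * y)%g = (star y * star x)%g)
  (star_invol : forall x : G, star (star x) = x)
  (sigma : G -> R)
  (sigma_one : sigma 1%g = 1%R)
  (sigma_mul : forall x y : G, sigma (x * y)%g = (sigma x * sigma y)%R)
  (sigma_nontriv : exists x : G, sigma x <> 1%R)
  (sigma_compat : forall x : G, sigma (x * star x)%g = 1%R) :
  S_anticommutative sigma star ->
  forall x y : G, star x <> x -> star y <> y ->
    ((x * x)^-1 * y^-1 * (x * x) * y)%g = 1%g.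
Proof.
move=> anti x y sx sy.
have two0 : (2%:R : R) != 0%R.
  by move: charR; rewrite inE /=.
have unit2 : forall g : G, (2%:R * sigma g = 0 -> False)%R.
  move=> g H; move/eqP: two0; apply.
  have : (2%:R * sigma g * sigma (g^-1)%g = 0)%R by rewrite H mul0r.
  by rewrite -mulrA -sigma_mul mulgV sigma_one mulr1.
have ev : forall a b g, in_S sigma star a -> in_S sigma star b ->
    coef (rg_add (rg_mul a b) (rg_mul b a)) g = 0%R.
  by move=> a b g Ha Hb; rewrite (anti a b Ha Hb g) coef_nil.
set s := sigma x; set t := sigma y.
pose a := [:: (1%R, x); (s, star x)].
have aS : in_S sigma star a by apply: gen_in_S; right; right; exists x.
have H1 := ev a a (x * x)%g aS aS.
rewrite /rg_add /rg_mul /= !coef_cons coef_nil eqxx in H1.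
have e1 : (x * star x == x * x)%g = false.
  by apply/eqP => /mulgI.
have e2 : (star x * x == x * x)%g = false.
  by apply/eqP => /mulIg.
rewrite e1 e2 in H1.
have xx : (star x * star x = x * x)%g.
  case: eqP H1 => // _ H1; exfalso; move/eqP: two0; apply; rewrite -H1; ring.
rewrite xx eqxx in H1.
have E1 : 2%:R + 2%:R * s * s = 0 by rewrite -H1; ring.
have H2 := ev a a (x * star x)%g aS aS.
rewrite /rg_add /rg_mul /= !coef_cons coef_nil eqxx in H2.
have e3 : ((x * x)%g == (x * star x)%g) = false.
  by apply/eqP => /mulgI /esym.
have e4 : ((star x * star x)%g == (x * star x)%g) = false.
  by rewrite xx e3.
rewrite e3 e4 in H2.
have four0 : 4%:R = 0 :> R.
  case: eqP H2 => _ H2.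
    have h4 : 4%:R * s = 0 by rewrite -H2; ring.
    have := congr1 (fun z => z * sigma (x^-1)%g) h4.
    by rewrite /= mul0r -mulrA -sigma_mul mulgV sigma_one mulr1.
  by exfalso; apply: (unit2 x); rewrite -H2 -/s; ring.
set c := (x * x)%g.
have starc : star c = c by rewrite /c star_mul xx.
have twoS : forall g, star g = g -> (2%:R * (1 - sigma g) = 0) ->
    in_S sigma star [:: (2%:R, g)].
  move=> g sg H; apply: gen_in_S; case: (eqVneq (sigma g) 1) => eg.
    by left; exists g.
  by right; left; exists g, 2%:R; split => //; apply/eqP.
have cS : in_S sigma star [:: (2%:R, c)].
  apply: twoS => //; rewrite sigma_mul -/s.
  have -> : 2%:R * (1 - s * s) = 4%:R - (2%:R + 2%:R * s * s) :> R by ring.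
  by rewrite four0 E1 subrr.
pose b := [:: (1, y); (t, star y)].
have bS : in_S sigma star b by apply: gen_in_S; right; right; exists y.
have done_ : (y * c = c * y)%g -> ((c)^-1 * y^-1 * c * y)%g = 1%g.
  by move=> E; rewrite -mulgA -E mulgA mulgVK mulVg.
apply: done_.
have H3 := ev _ _ (c * y)%g cS bS.
rewrite /rg_add /rg_mul /= !coef_cons coef_nil eqxx in H3.
have e5 : ((c * star y)%g == (c * y)%g) = false.
  by apply/eqP => /mulgI.
rewrite e5 in H3.
case: eqP H3 => [//|ne6 H3].
case: eqP H3 => [D H3|_ H3]; last first.
  by exfalso; move/eqP: two0; apply; rewrite -H3; ring.
have E2 : 2%:R + 2%:R * t = 0 by rewrite -H3; ring.
set cy := (c * y)%g.
have starcy : star cy = cy by rewrite /cy star_mul starc D.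
have cyS : in_S sigma star [:: (2%:R, cy)].
  apply: twoS => //; rewrite !sigma_mul -/s -/t.
  have -> : 2%:R * (1 - s * s * t) = - t * (2%:R + 2%:R * s * s) + (2%:R + 2%:R * t) :> R by ring.
  by rewrite E1 E2 mulr0 add0r.
have xc : (x * c = c * x)%g by rewrite /c !mulgA.
have sxc : (star x * c = c * star x)%g by rewrite /c -xx !mulgA.
have H5 := ev _ _ (cy * x)%g cyS aS.
rewrite /rg_add /rg_mul /= !coef_cons coef_nil eqxx in H5.
have e7 : ((cy * star x)%g == (cy * x)%g) = false.
  by apply/eqP => /mulgI.
rewrite e7 in H5.
case: eqP H5 => [E H5|_ H5].
  have yx : (y * x = x * y)%g.
    by move: E; rewrite /cy mulgA xc -!mulgA => /mulgI /mulgI /esym.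
  have yc : (y * c = c * y)%g by rewrite /c mulgA yx -mulgA yx mulgA.
  by exfalso; apply: sy; apply: (mulIg c); rewrite D.
case: eqP H5 => [E H5|_ H5]; last first.
  by exfalso; move/eqP: two0; apply; rewrite -H5; ring.
have yx : (star x * y = y * x)%g.
  by move: E; rewrite /cy mulgA sxc -!mulgA => /mulgI /mulgI.
by rewrite /c mulgA -yx -mulgA -yx mulgA xx.
Qed.
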